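(* Let $(X,d_X)$ be a metric space and $(Y,d_Y)$ a metric space with the uniform Stone property, i.e. $\Delta_Y^{(u)}(r)>0$ for all $r>0$. If there exists a uniform embedding $f\colon X\to Y$, then $X$ has the uniform Stone property, i.e. $\Delta_X^{(u)}(r)>0$ for all $r>0$. If $f$ is a bi-Lipschitz embedding and there is $c>0$ such that $\Delta_Y^{(u)}(r)\geq cr$ for all $r>0$, then $\Delta_X^{(u)}(r)\geq \frac{c}{\mathrm{dist}(f)}r$ for all $r>0$.
   Context: For a metric space $X$ and a cover $\mathcal{U}$ of $X$: $\mathrm{diam}(\mathcal{U})=\sup_{U\in\mathcal{U}}\mathrm{diam}(U)$; $\mathcal{L}(\mathcal{U})=\sup\{d\in[0,\infty): \text{every } E\subseteq X \text{ with } \mathrm{diam}(E)<d \text{ is contained in some } U\in\mathcal{U}\}$; $\mathcal{U}$ is point-finite if each point lies in only finitely many members. $\Delta_X^{(u)}(r)=\sup\{\mathcal{L}(\mathcal{U}): \mathcal{U} \text{ a point-finite cover of } X,\ \mathrm{diam}(\mathcal{U})\leq r\}$. For $f\colon X\to Y$: $\omega_f(t)=\sup\{d_Y(f(x_1),f(x_2)): d_X(x_1,x_2)\leq t\}$, $\rho_f(t)=\inf\{d_Y(f(x_1),f(x_2)): d_X(x_1,x_2)\geq t\}$; $f$ is a uniform embedding if $\lim_{t\to0}\omega_f(t)=0$ and $\rho_f(t)>0$ for all $t>0$; a bi-Lipschitz embedding if there is $A\geq1$ with $\omega_f(t)\leq At$, $\rho_f(t)\geq t/A$. $\mathrm{Lip}(f)=\sup_{x_1\neq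 x_2} d_Y(f(x_1),f(x_2))/d_X(x_1,x_2)$, and for injective $f$, $\mathrm{dist}(f)=\mathrm{Lip}(f)\cdot\mathrm{Lip}(f^{-1})$. *)

(* Defs.v *)
From HB Require Import structures.
From mathcomp Require Import all_boot all_order all_algebra.
From mathcomp Require Import all_classical all_reals ereal.
Set Implicit Arguments. Unset Strict Implicit. Unset Printing Implicit Defensive.
Import Order.TTheory GRing.Theory Num.Theory.
Local Open Scope classical_set_scope.
Local Open Scope ring_scope.
Local Open Scope ereal_scope.

Section Defs.
Variable R : realType.

Definition is_metric (T : Type) (d : T -> T -> R) : Prop :=
  [/\ (forall x y, (0 <= d x y)%R),
      (forall x y, d x y = 0%R <-> x = y),
      (forall x y, d x y = d y x) &
      (forall x y z, (d x z <= d x y + d y z)%R)].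

(* diameter, in the extended reals (diam of the empty set is -oo) *)
Definition diam (T : Type) (d : T -> T -> R) (E : set T) : \bar R :=
  ereal_sup [set (d x y)%:E | x in E & y in E].

Definition is_cover (T : Type) (U : set (set T)) : Prop :=
  forall x : T, exists2 A, U A & A x.

Definition point_finite (T : Type) (U : set (set T)) : Prop :=
  forall x : T, finite_set [set A | U A /\ A x].

Definition cover_diam (T : Type) (d : T -> T -> R) (U : set (set T)) : \bar R :=
  ereal_sup [set diam d A | A in U].

Definition lebesgue_number (T : Type) (d : T -> T -> R) (U : set (set T)) : \bar R :=
  ereal_sup [set delta%:E | delta in
    [set delta : R | (0 <= delta)%R /\
       forall E : set T, diam d E < delta%:E -> exists2 A, U A & E `<=` A]].

Definition Delta_u (T : Type) (d : T -> T -> R) (r : R) : \bar R :=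
  ereal_sup [set lebesgue_number d U | U in
    [set U : set (set T) | is_cover U /\ point_finite U /\ cover_diam d U <= r%:E]].

Definition uniform_stone (T : Type) (d : T -> T -> R) : Prop :=
  forall r : R, (0 < r)%R -> 0 < Delta_u d r.

Definition omega_f (X Y : Type) (dX : X -> X -> R) (dY : Y -> Y -> R)
  (f : X -> Y) (t : R) : \bar R :=
  ereal_sup [set (dY (f p.1) (f p.2))%:E | p in [set p : X * X | (dX p.1 p.2 <= t)%R]].

Definition rho_f (X Y : Type) (dX : X -> X -> R) (dY : Y -> Y -> R)
  (f : X -> Y) (t : R) : \bar R :=
  ereal_inf [set (dY (f p.1) (f p.2))%:E | p in [set p : X * X | (t <= dX p.1 p.2)%R]].

Definition uniform_embedding (X Y : Type) (dX : X -> X -> R) (dY : Y -> Y -> R)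
  (f : X -> Y) : Prop :=
  (forall eps : R, (0 < eps)%R -> exists2 delta : R, (0 < delta)%R &
      forall t : R, (0 <= t)%R -> (t < delta)%R -> `|omega_f dX dY f t| <= eps%:E)
  /\ (forall t : R, (0 < t)%R -> 0 < rho_f dX dY f t).

Definition bilipschitz_embedding (X Y : Type) (dX : X -> X -> R) (dY : Y -> Y -> R)
  (f : X -> Y) : Prop :=
  exists2 A : R, (1 <= A)%R &
    forall t : R, (0 < t)%R ->
      omega_f dX dY f t <= (A * t)%:E /\ (t / A)%:E <= rho_f dX dY f t.

Definition Lip (X Y : Type) (dX : X -> X -> R) (dY : Y -> Y -> R) (f : X -> Y) : \bar R :=
  ereal_sup [set (dY (f p.1) (f p.2) / dX p.1 p.2)%:E | p in [set p : X * X | p.1 <> p.2]].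

(* Lip(f^{-1}) for injective f, computed on the image f(X) *)
Definition Lip_inv (X Y : Type) (dX : X -> X -> R) (dY : Y -> Y -> R) (f : X -> Y) : \bar R :=
  ereal_sup [set (dX p.1 p.2 / dY (f p.1) (f p.2))%:E | p in [set p : X * X | p.1 <> p.2]].

Definition distortion (X Y : Type) (dX : X -> X -> R) (dY : Y -> Y -> R) (f : X -> Y) : \bar R :=
  Lip dX dY f * Lip_inv dX dY f.

End Defs.

(* Main.v *)
Require Import Defs.
From HB Require Import structures.
From mathcomp Require Import all_boot all_order all_algebra.
From mathcomp Require Import all_classical all_reals ereal.
From mathcomp Require Import ring lra.
Import Order.TTheory GRing.Theory Num.Theory.
Local Open Scope classical_set_scope.
Local Open Scope ring_scope.
Local Open Scope ereal_scope.

Set Implicit Arguments. Unset Strict Implicit.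
Section Aux.
Variable R : realType.

Lemma diam_le T (d : T -> T -> R) (E : set T) (a : \bar R) :
  (forall x y, E x -> E y -> (d x y)%:E <= a) -> diam d E <= a.
Proof. move=> H; apply: ge_ereal_sup => _ [x Ex [y Ey <-]]; exact: H. Qed.

Lemma diam_ge T (d : T -> T -> R) (E : set T) x y : E x -> E y -> (d x y)%:E <= diam d E.
Proof. move=> Ex Ey; apply: ereal_sup_ubound; by exists x => //; exists y. Qed.

Lemma cover_diam_le T (d : T -> T -> R) (U : set (set T)) a :
  (forall A, U A -> diam d A <= a) -> cover_diam d U <= a.
Proof. move=> H; apply: ge_ereal_sup => _ [A UA <-]; exact: H. Qed.

Lemma cover_diam_ge T (d : T -> T -> R) (U : set (set T)) A :
  U A -> diam d A <= cover_diam d U.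
Proof. move=> UA; by apply: ereal_sup_ubound; exists A. Qed.

Lemma Delta_ge T (d : T -> T -> R) (U : set (set T)) r (delta : R) :
  is_cover U -> point_finite U -> cover_diam d U <= r%:E -> (0 <= delta)%R ->
  (forall E, diam d E < delta%:E -> exists2 A, U A & E `<=` A) ->
  delta%:E <= Delta_u d r.
Proof.
move=> cU pU dU d0 H.
apply: (@le_trans _ _ (lebesgue_number d U)).
  by apply: ereal_sup_ubound; exists delta.
by apply: ereal_sup_ubound; exists U.
Qed.

Lemma Delta_gt T (d : T -> T -> R) r (e : R) : e%:E < Delta_u d r ->
  exists U : set (set T), [/\ is_cover U, point_finite U, cover_diam d U <= r%:E &
   exists2 delta : R, (e < delta)%R /\ (0 <= delta)%R &
     forall E, diam d E < delta%:E -> exists2 A, U A & E `<=` A].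
Proof.
move=> /ereal_sup_gt[_ [U [cU [pU dU]] <-]] /ereal_sup_gt[_ [delta [d0 H] <-]].
rewrite lte_fin => ed; exists U; split => //; exists delta => //.
Qed.

Lemma pull_cover T T' (f : T -> T') (V : set (set T')) :
  is_cover V -> point_finite V ->
  is_cover [set f @^-1` B | B in V] /\ point_finite [set f @^-1` B | B in V].
Proof.
move=> cV pV; split.
  move=> x; have [B VB Bfx] := cV (f x); by exists (f @^-1` B) => //; exists B.
move=> x; apply: (@sub_finite_set _ _ (preimage f @` [set B | V B /\ B (f x)])).
  by move=> _ [[B VB <-] Bx]; exists B.
exact/finite_image/pV.
Qed.

Lemma pull_leb T T' (f : T -> T') (V : set (set T')) (dT : T -> T -> R)
  (dT' : T' -> T' -> R) (dx dy : R) :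
  (forall E, diam dT' E < dy%:E -> exists2 A, V A & E `<=` A) ->
  (forall E, diam dT E < dx%:E -> diam dT' (f @` E) < dy%:E) ->
  forall E, diam dT E < dx%:E -> exists2 A, [set f @^-1` B | B in V] A & E `<=` A.
Proof.
move=> HV Hd E /Hd /HV [B VB sB]; exists (f @^-1` B); first by exists B.
by move=> x Ex; apply: sB; exists x.
Qed.

End Aux.
Unset Implicit Arguments.
Lemma part1 (R : realType) (X Y : Type)
  (dX : X -> X -> R) (dY : Y -> Y -> R) :
  is_metric dX -> is_metric dY -> uniform_stone dY ->
  (forall f : X -> Y, uniform_embedding dX dY f -> uniform_stone dX).
Proof.
move=> [dX0 _ _ _] mY sY f [Hom Hrho] r r0.
have [s [s0 hs]] : exists s : R, (0 < s)%R /\ s%:E < rho_f dX dY f r.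
  move: (Hrho r r0); case: (rho_f dX dY f r) => [q||] //.
  - rewrite lte_fin => q0; exists (q / 2)%R; split; first by rewrite divr_gt0.
    by rewrite lte_fin ltr_pdivrMr // ltr_pMr // ltr1n.
  - by move=> _; exists 1%R; split; rewrite ?ltr01 ?ltry.
have := sY s s0; rewrite -[0]/(0%R%:E).
move=> /Delta_gt [V [cV pV dV [dy [dy0 _] HV]]].
have [d0 d00 Hd0] := Hom (dy / 2)%R (divr_gt0 dy0 (ltr0n _ 2)).
have [cU pU] := pull_cover f cV pV.
apply: (@lt_le_trans _ _ d0%:E); first by rewrite lte_fin.
apply: (Delta_ge cU pU _ (ltW d00)); last first.
- apply: (pull_leb HV) => E dE.
  apply: (@le_lt_trans _ _ (dy / 2)%:E); last first.
    by rewrite lte_fin ltr_pdivrMr // ltr_pMr // ltr1n.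
  apply: diam_le => _ _ [x Ex <-] [y Ey <-].
  have hxy : (dX x y)%:E < d0%:E by apply: le_lt_trans (diam_ge _ Ex Ey) dE.
  apply: (@le_trans _ _ (omega_f dX dY f (dX x y))).
    apply: ereal_sup_ubound; exists (x, y) => //=.
  apply: le_trans (Hd0 _ (dX0 x y) _); first exact: lee_abs.
  by rewrite -lte_fin.
- apply: cover_diam_le => _ [B VB <-]; apply: diam_le => x y Bx By.
  have hB : (dY (f x) (f y))%:E <= s%:E.
    apply: le_trans (diam_ge dY Bx By) _.
    exact: le_trans (cover_diam_ge _ VB) dV.
  rewrite lee_fin leNgt; apply/negP => rxy.
  have : rho_f dX dY f r <= (dY (f x) (f y))%:E.
    apply: ereal_inf_lbound; exists (x, y) => //=; exact: ltW.
  move=> /le_trans /(_ hB); rewrite leNgt hs //.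
Qed.
Lemma part2_gen (R : realType) (X Y : Type)
  (dX : X -> X -> R) (dY : Y -> Y -> R) (f : X -> Y) (l m s e : R) :
  (0 < l)%R -> (0 < m)%R ->
  (forall x y, (dY (f x) (f y) <= l * dX x y)%R) ->
  (forall x y, (dX x y <= m * dY (f x) (f y))%R) ->
  e%:E < Delta_u dY s -> (e / l)%:E <= Delta_u dX (m * s).
Proof.
move=> l0 m0 Hl Hm /Delta_gt [V [cV pV dV [dy [edy dy0] HV]]].
have [cU pU] := pull_cover f cV pV.
apply: (@le_trans _ _ (dy / l)%:E).
  by rewrite lee_fin ler_wpM2r // ?invr_ge0 ?ltW.
apply: (Delta_ge cU pU _ (divr_ge0 dy0 (ltW l0))).
- apply: cover_diam_le => _ [B VB <-]; apply: diam_le => x y Bx By.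
  have hB : (dY (f x) (f y))%:E <= s%:E.
    apply: le_trans (diam_ge dY Bx By) _.
    exact: le_trans (cover_diam_ge _ VB) dV.
  rewrite lee_fin in hB; rewrite lee_fin; apply: le_trans (Hm x y) _.
  by rewrite ler_wpM2l // ltW.
- apply: (pull_leb HV) => E dE.
  have lfin : l%:E \is a fin_num by [].
  have lpos : 0 < l%:E by rewrite lte_fin.
  apply: (@le_lt_trans _ _ (l%:E * diam dX E)).
    apply: diam_le => _ _ [x Ex <-] [y Ey <-].
    apply: (@le_trans _ _ (l%:E * (dX x y)%:E)).
      by rewrite -EFinM lee_fin.
    by rewrite lee_pmul2l //; exact: diam_ge.
  apply: (@lt_le_trans _ _ (l%:E * (dy / l)%:E)).
    by rewrite lte_pmul2l.
  by rewrite -EFinM lee_fin mulrC divfK // gt_eqF.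
Qed.
Lemma part2 (R : realType) (X Y : Type)
  (dX : X -> X -> R) (dY : Y -> Y -> R) :
  is_metric dX -> is_metric dY -> 
  (forall (f : X -> Y) (c : R), bilipschitz_embedding dX dY f -> (0 < c)%R ->
     (forall r : R, (0 < r)%R -> (c * r)%:E <= Delta_u dY r) ->
     forall r : R, (0 < r)%R ->
       (c * r)%:E * (distortion dX dY f)^-1 <= Delta_u dX r).
Proof.
move=> [dX0 dX1 dXs _] [dY0 dY1 dYs _] f c [A A1 HA] c0 Hc r r0.
have A0 : (0 < A)%R by apply: lt_le_trans A1; exact: ltr01.
have dpos : forall x y, x <> y -> (0 < dX x y)%R.
  move=> x y nxy; rewrite lt_def dX0 andbT; apply/eqP => /dX1; exact: nxy.
have Hlo : forall x y, x <> y -> (dX x y / A <= dY (f x) (f y))%R.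
  move=> x y nxy; have [_ h] := HA _ (dpos _ _ nxy).
  rewrite -lee_fin; apply: le_trans h _.
  by apply: ereal_inf_lbound; exists (x, y) => //=.
have Hup : forall x y, x <> y -> (dY (f x) (f y) <= A * dX x y)%R.
  move=> x y nxy; have [h _] := HA _ (dpos _ _ nxy).
  rewrite -lee_fin; apply: le_trans h.
  by apply: ereal_sup_ubound; exists (x, y) => //=.
have dYpos : forall x y, x <> y -> (0 < dY (f x) (f y))%R.
  move=> x y nxy; apply: lt_le_trans (Hlo _ _ nxy).
  by rewrite divr_gt0 // dpos.
case: (pselect (exists x y, x <> y :> X)) => [[x0 [y0 nxy0]]|nd].
  have LA : Lip dX dY f <= A%:E.
    apply: ge_ereal_sup => _ [[x y] /= nxy <-].
    by rewrite lee_fin ler_pdivrMr ?dpos //; exact: Hup.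
  have L0 : ((dY (f x0) (f y0)) / dX x0 y0)%:E <= Lip dX dY f.
    by apply: ereal_sup_ubound; exists (x0, y0).
  have [l Ll] : exists l, Lip dX dY f = l%:E.
    by move: LA L0; case: (Lip dX dY f) => [l|//|//]; exists l.
  have l0 : (0 < l)%R.
    move: L0; rewrite Ll lee_fin; apply: lt_le_trans.
    by rewrite divr_gt0 ?dpos ?dYpos.
  have Hl : forall x y, (dY (f x) (f y) <= l * dX x y)%R.
    move=> x y; case: (pselect (x = y)) => [<-|nxy].
      by rewrite (proj2 (dY1 _ _) erefl) (proj2 (dX1 _ _) erefl) mulr0.
    have : ((dY (f x) (f y)) / dX x y)%:E <= Lip dX dY f.
      by apply: ereal_sup_ubound; exists (x, y).
    by rewrite Ll lee_fin ler_pdivrMr ?dpos // mulrC.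
  have MA : Lip_inv dX dY f <= A%:E.
    apply: ge_ereal_sup => _ [[x y] /= nxy <-].
    rewrite lee_fin ler_pdivrMr ?dYpos // mulrC -ler_pdivrMr //; exact: Hlo.
  have M0 : (dX x0 y0 / (dY (f x0) (f y0)))%:E <= Lip_inv dX dY f.
    by apply: ereal_sup_ubound; exists (x0, y0).
  have [m Mm] : exists m, Lip_inv dX dY f = m%:E.
    by move: MA M0; case: (Lip_inv dX dY f) => [m|//|//]; exists m.
  have m0 : (0 < m)%R.
    move: M0; rewrite Mm lee_fin; apply: lt_le_trans.
    by rewrite divr_gt0 ?dpos ?dYpos.
  have Hm : forall x y, (dX x y <= m * dY (f x) (f y))%R.
    move=> x y; case: (pselect (x = y)) => [<-|nxy].
      by rewrite (proj2 (dY1 _ _) erefl) (proj2 (dX1 _ _) erefl) mulr0.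
    have : (dX x y / (dY (f x) (f y)))%:E <= Lip_inv dX dY f.
      by apply: ereal_sup_ubound; exists (x, y).
    by rewrite Mm lee_fin ler_pdivrMr ?dYpos // mulrC.
  rewrite /distortion Ll Mm -EFinM inver gt_eqF ?mulr_gt0 // -EFinM.
  have G := fun e => @part2_gen R X Y dX dY f l m (r / m) e l0 m0 Hl Hm.
  have mr : (m * (r / m))%R = r by rewrite mulrC divfK // gt_eqF.
  rewrite mr in G.
  have Hcs := Hc (r / m)%R (divr_gt0 r0 m0).
  have cs0 : (0 < c * (r / m))%R by rewrite mulr_gt0 // divr_gt0.
  rewrite leNgt; apply/negP => H.
  have D0 : 0%:E <= Delta_u dX r.
    have := G 0%R; rewrite mul0r; apply.
    by apply: lt_le_trans Hcs; rewrite lte_fin.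
  have [d Dd] : exists d, Delta_u dX r = d%:E.
    by move: D0 H; case: (Delta_u dX r) => [d|//|//]; exists d.
  rewrite Dd lte_fin in H.
  pose q := ((d + c * r * (l * m)^-1) / 2)%R.
  have : (l * q)%:E < Delta_u dY (r / m)%R.
    apply: lt_le_trans Hcs; rewrite lte_fin.
    have -> : (c * (r / m) = l * (c * r * (l * m)^-1))%R.
      by field; rewrite ?gt_eqF.
    by rewrite ltr_pM2l // /q; lra.
  move=> /G; rewrite Dd lee_fin.
  have -> : (l * q / l = q)%R by field; rewrite gt_eqF.
  by rewrite /q; lra.
have eqXY : forall x y : X, x = y.
  by move=> x y; apply: contra_notP nd => nxy; exists x, y.
have -> : distortion dX dY f = +oo.
  rewrite /distortion /Lip /Lip_inv.
  have -> : [set p : X * X | p.1 <> p.2] = set0.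
    by apply/seteqP; split => // -[x y] /= /(_ (eqXY x y)).
  by rewrite !image_set0 ereal_sup0.
rewrite invey mule0.
apply: (@Delta_ge _ _ _ [set setT] r 0%R) => //.
- by move=> x; exists setT.
- move=> x; apply: (@sub_finite_set _ _ [set setT]); last exact: finite_set1.
  by move=> A' [-> _].
- apply: cover_diam_le => _ ->; apply: diam_le => x y _ _.
  by rewrite (eqXY x y) lee_fin; have /dX1 -> : y = y by []; exact: ltW.
- by move=> E _; exists setT.
Qed.

Theorem proposition3p8 (R : realType) (X Y : Type)
  (dX : X -> X -> R) (dY : Y -> Y -> R) :
  is_metric dX -> is_metric dY -> uniform_stone dY ->
  (forall f : X -> Y, uniform_embedding dX dY f -> uniform_stone dX) /\
  (forall (f : X -> Y) (c : R), bilipschitz_embedding dX dY f -> (0 < c)%R ->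
     (forall r : R, (0 < r)%R -> (c * r)%:E <= Delta_u dY r) ->
     forall r : R, (0 < r)%R ->
       (c * r)%:E * (distortion dX dY f)^-1 <= Delta_u dX r).
Proof.
move=> mX mY sY; split; first exact: part1.
exact: part2.
Qed.
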